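(* Let $N$ be the surface described in the context, with $l>0$. Then no configuration $(x_1,x_2)$ with $x_1,x_2$ in the interior $\{(t,\theta):0<t<l\}$ of the cylinder $C\subset N$ is midpoint secure in $N$.
   Context: Construction of $N$: let $C=[0,l]\times S^1$ be the flat cylinder of length $l>0$ and radius $1$, with points written $(t,\theta)$, $t\in[0,l]$, $\theta\in\mathbb{R}/2\pi\mathbb{Z}$. Let $H_0$ and $H_l$ be two hemispheres of the round unit sphere, and let $N$ be obtained by gluing the equator of $H_0$ isometrically to $\{0\}\times S^1$ and the equator of $H_l$ isometrically to $\{l\}\times S^1$, so that $N$ is a closed $C^1$ surface with a piecewise smooth Riemannian metric; geodesics of $N$ are the $C^1$ curves that are geodesics in each of the pieces $C,H_0,H_l$. Conventions: a geodesic has positive finite length and is parametrized by $[0,1]$ proportionally to arclength. $G(x,y)$ is the set of geodesics $\gamma$ with $\gamma(0)=x$, $\gamma(1)=y$. A set $B$ is a midpoint blocking set for $G(x,y)$ if $\gamma(1/2)\in B$ for every $\gamma\in G(x,y)$ (endpoints allowed in $B$); $(x,y)$ is midpoint secure if $G(x,y)$ has a finite midpoint blocking set. *)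

(* Defs.v *)
From Stdlib Require Import Reals Lra List.
Open Scope R_scope.

(** Points of R^3.  The surface N is realised by its standard isometric
    embedding in R^3 as a "capsule": the cylinder
      C  = { x^2+y^2 = 1, 0 <= z <= l }   ((t,theta) |-> (cos theta, sin theta, t)),
    the lower unit hemisphere H_0 centred at (0,0,0) with z <= 0, and the
    upper unit hemisphere H_l centred at (0,0,l) with z >= l.  The induced
    metric is the glued piecewise smooth metric of N. *)
Record pt := Pt { px : R; py : R; pz : R }.

Inductive piece := PC | PH0 | PHl.

Definition in_piece (l : R) (P : piece) (p : pt) : Prop :=
  match P with
  | PC  => px p ^ 2 + py p ^ 2 = 1 /\ 0 <= pz p <= l
  | PH0 => px p ^ 2 + py p ^ 2 + pz p ^ 2 = 1 /\ pz p <= 0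
  | PHl => px p ^ 2 + py p ^ 2 + (pz p - l) ^ 2 = 1 /\ l <= pz p
  end.

Definition in_N (l : R) (p : pt) : Prop :=
  in_piece l PC p \/ in_piece l PH0 p \/ in_piece l PHl p.

Definition normal (l : R) (P : piece) (p : pt) : pt :=
  match P with
  | PC  => Pt (px p) (py p) 0
  | PH0 => Pt (px p) (py p) (pz p)
  | PHl => Pt (px p) (py p) (pz p - l)
  end.

Definition cyl_pt (t theta : R) : pt := Pt (cos theta) (sin theta) t.

Definition has_deriv_on (f f' : R -> R) (a b : R) : Prop :=
  forall t, a <= t <= b ->
  forall eps, 0 < eps -> exists delta, 0 < delta /\
    forall h, h <> 0 -> Rabs h < delta -> a <= t + h <= b ->
      Rabs ((f (t + h) - f t) / h - f' t) < eps.

Definition cont_on (f : R -> R) (a b : R) : Prop :=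
  forall t, a <= t <= b ->
  forall eps, 0 < eps -> exists delta, 0 < delta /\
    forall s, a <= s <= b -> Rabs (s - t) < delta -> Rabs (f s - f t) < eps.

Definition comps : list (pt -> R) := px :: py :: pz :: nil.

(** A geodesic of N: a C^1 map g : [0,1] -> N (only values on [0,1] matter),
    with constant positive speed L (= its length, so it is parametrised
    proportionally to arclength), which is a geodesic of each piece P on
    every open time interval during which it stays in P: there it is C^2
    and its acceleration is normal to P (vanishing covariant acceleration). *)
Definition is_geodesic (l : R) (g : R -> pt) : Prop :=
  (forall t, 0 <= t <= 1 -> in_N l (g t)) /\
  exists g' : R -> pt,
    (forall c, In c comps ->
       has_deriv_on (fun t => c (g t)) (fun t => c (g' t)) 0 1 /\
       cont_on (fun t => c (g' t)) 0 1) /\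
    (exists L, 0 < L /\
       forall t, 0 <= t <= 1 ->
         px (g' t) ^ 2 + py (g' t) ^ 2 + pz (g' t) ^ 2 = L ^ 2) /\
    (forall (P : piece) a b, 0 <= a -> a < b -> b <= 1 ->
       (forall t, a < t < b -> in_piece l P (g t)) ->
       forall t, a < t < b ->
         exists acc : pt,
           (forall c, In c comps ->
              derivable_pt_lim (fun s => c (g' s)) t (c acc)) /\
           exists lam : R,
             forall c, In c comps -> c acc = lam * c (normal l P (g t))).

Definition in_G (l : R) (x y : pt) (g : R -> pt) : Prop :=
  is_geodesic l g /\ g 0 = x /\ g 1 = y.

Definition midpoint_blocking (l : R) (x y : pt) (B : list pt) : Prop :=
  forall g, in_G l x y g -> In (g (1/2)) B.

Definition midpoint_secure (l : R) (x y : pt) : Prop :=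
  exists B : list pt, midpoint_blocking l x y B.

(* Main.v *)
Require Import Defs.
From Stdlib Require Import Reals Lra Lia List FinFun.
Open Scope R_scope.

Definition glue2 (a : R) (f g : R -> R) (s : R) : R :=
  if Rle_dec s a then f s else g s.

Lemma dlim_local (f h : R -> R) x l r : 0 < r ->
  (forall y, Rabs (y - x) < r -> h y = f y) ->
  derivable_pt_lim f x l -> derivable_pt_lim h x l.
Proof.
  intros Hr Hloc Hd eps Heps.
  destruct (Hd eps Heps) as [d Hdd].
  assert (Hm : 0 < Rmin d r) by (apply Rmin_glb_lt; [apply cond_pos|lra]).
  exists (mkposreal _ Hm). intros h0 Hh0 Hlt. simpl in Hlt.
  rewrite (Hloc (x + h0)), (Hloc x).
  - apply Hdd; auto. apply Rlt_le_trans with (1 := Hlt); apply Rmin_l.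
  - rewrite Rminus_diag, Rabs_R0; lra.
  - replace (x + h0 - x) with h0 by ring.
    apply Rlt_le_trans with (1 := Hlt); apply Rmin_r.
Qed.

Lemma glue2_left f g a x l : x < a -> derivable_pt_lim f x l ->
  derivable_pt_lim (glue2 a f g) x l.
Proof.
  intros Hx Hd. apply (dlim_local f _ x l (a - x)); [lra| |exact Hd].
  intros y Hy. unfold glue2. destruct (Rle_dec y a); auto.
  exfalso. apply Rabs_def2 in Hy. lra.
Qed.

Lemma glue2_right f g a x l : a < x -> derivable_pt_lim g x l ->
  derivable_pt_lim (glue2 a f g) x l.
Proof.
  intros Hx Hd. apply (dlim_local g _ x l (x - a)); [lra| |exact Hd].
  intros y Hy. unfold glue2. destruct (Rle_dec y a); auto.
  exfalso. apply Rabs_def2 in Hy. lra.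
Qed.

Lemma glue2_deriv f g f' g' a :
  (forall x, derivable_pt_lim f x (f' x)) ->
  (forall x, derivable_pt_lim g x (g' x)) ->
  f a = g a -> f' a = g' a ->
  forall x, derivable_pt_lim (glue2 a f g) x (glue2 a f' g' x).
Proof.
  intros Hf Hg Ha Ha' x.
  destruct (Rtotal_order x a) as [Hx|[Hx|Hx]].
  - unfold glue2 at 2. destruct (Rle_dec x a); [|lra].
    apply glue2_left; auto.
  - subst x. unfold glue2 at 2. destruct (Rle_dec a a); [|lra].
    intros eps Heps.
    destruct (Hf a eps Heps) as [d1 H1].
    destruct (Hg a eps Heps) as [d2 H2].
    assert (Hm : 0 < Rmin d1 d2) by (apply Rmin_glb_lt; apply cond_pos).
    exists (mkposreal _ Hm). intros h0 Hh0 Hlt. simpl in Hlt.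
    unfold glue2. destruct (Rle_dec a a); [|lra].
    destruct (Rle_dec (a + h0) a).
    + apply H1; auto. apply Rlt_le_trans with (1 := Hlt); apply Rmin_l.
    + rewrite Ha, Ha'. apply H2; auto. apply Rlt_le_trans with (1 := Hlt); apply Rmin_r.
  - unfold glue2 at 2. destruct (Rle_dec x a); [lra|].
    apply glue2_right; auto.
Qed.

Definition ctn (f : R -> R) x := forall eps, 0 < eps -> exists d, 0 < d /\
  forall y, Rabs (y - x) < d -> Rabs (f y - f x) < eps.

Lemma deriv_ctn f x l : derivable_pt_lim f x l -> ctn f x.
Proof.
  intros H.
  assert (Hc : continuity_pt f x).
  { apply derivable_continuous_pt. exists l. exact H. }
  intros eps Heps. destruct (Hc eps Heps) as [d [Hd Hdd]].
  exists d. split; auto. intros y Hy.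
  destruct (Req_dec y x) as [->|Hne].
  - rewrite Rminus_diag, Rabs_R0; auto.
  - apply (Hdd y). split. { unfold D_x, no_cond. split; auto. }
    exact Hy.
Qed.

Lemma glue2_ctn f g a : (forall x, ctn f x) -> (forall x, ctn g x) -> f a = g a ->
  forall x, ctn (glue2 a f g) x.
Proof.
  intros Hf Hg Ha x eps Heps.
  destruct (Hf x eps Heps) as [d1 [Hd1 H1]].
  destruct (Hg x eps Heps) as [d2 [Hd2 H2]].
  destruct (Hf a eps Heps) as [d3 [Hd3 H3]].
  destruct (Hg a eps Heps) as [d4 [Hd4 H4]].
  destruct (Rtotal_order x a) as [Hx|[Hx|Hx]].
  - exists (Rmin d1 (a - x)). split. { apply Rmin_glb_lt; lra. }
    intros y Hy. assert (Hy1 := Rlt_le_trans _ _ _ Hy (Rmin_l _ _)).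
    assert (Hy2 := Rlt_le_trans _ _ _ Hy (Rmin_r _ _)).
    apply Rabs_def2 in Hy2.
    unfold glue2. destruct (Rle_dec y a); [|lra]. destruct (Rle_dec x a); [|lra].
    auto.
  - subst x. exists (Rmin d3 d4). split. { apply Rmin_glb_lt; lra. }
    intros y Hy. assert (Hy1 := Rlt_le_trans _ _ _ Hy (Rmin_l _ _)).
    assert (Hy2 := Rlt_le_trans _ _ _ Hy (Rmin_r _ _)).
    unfold glue2. destruct (Rle_dec a a); [|lra].
    destruct (Rle_dec y a); auto. rewrite Ha; auto.
  - exists (Rmin d2 (x - a)). split. { apply Rmin_glb_lt; lra. }
    intros y Hy. assert (Hy1 := Rlt_le_trans _ _ _ Hy (Rmin_l _ _)).
    assert (Hy2 := Rlt_le_trans _ _ _ Hy (Rmin_r _ _)).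
    apply Rabs_def2 in Hy2.
    unfold glue2. destruct (Rle_dec y a); [lra|]. destruct (Rle_dec x a); [lra|].
    auto.
Qed.

Lemma ctn_cont_on f : (forall x, ctn f x) -> cont_on f 0 1.
Proof.
  intros H t _ eps Heps. destruct (H t eps Heps) as [d [Hd Hdd]].
  exists d. split; auto.
Qed.

Lemma deriv_has_deriv_on f f' : (forall x, derivable_pt_lim f x (f' x)) ->
  has_deriv_on f f' 0 1.
Proof.
  intros H t _ eps Heps. destruct (H t eps Heps) as [d Hd].
  exists d. split; [apply cond_pos|]. intros h Hh Hlt _. apply Hd; auto.
Qed.

Definition trig (p q r d c k : R) (s : R) : R :=
  p * cos (c + k * s) + q * sin (c + k * s) + r + d * s.

Lemma dlim_eq f x l l' : derivable_pt_lim f x l -> l = l' -> derivable_pt_lim f x l'.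
Proof. intros H ->; exact H. Qed.

Lemma dlim_ext f g x l : (forall y, f y = g y) -> derivable_pt_lim f x l -> derivable_pt_lim g x l.
Proof.
  intros He H eps Heps. destruct (H eps Heps) as [d Hd]. exists d.
  intros h0 H1 H2. rewrite <- !He. auto.
Qed.

Lemma trig_deriv p q r d c k x :
  derivable_pt_lim (trig p q r d c k) x (trig (k * q) (- (k * p)) d 0 c k x).
Proof.
  assert (Hl : derivable_pt_lim (fun s => c + k * s) x k).
  { apply dlim_eq with (0 + k * 1); [|ring].
    apply (derivable_pt_lim_plus (fun _ => c) (fun s => k * s)).
    apply derivable_pt_lim_const.
    apply (derivable_pt_lim_scal id). apply derivable_pt_lim_id. }
  assert (Hc : derivable_pt_lim (fun s => cos (c + k * s)) x (- sin (c + k * x) * k)).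
  { apply (derivable_pt_lim_comp (fun s => c + k * s) cos). exact Hl.
    apply derivable_pt_lim_cos. }
  assert (Hs : derivable_pt_lim (fun s => sin (c + k * s)) x (cos (c + k * x) * k)).
  { apply (derivable_pt_lim_comp (fun s => c + k * s) sin). exact Hl.
    apply derivable_pt_lim_sin. }
  apply dlim_eq with (p * (- sin (c + k * x) * k) + q * (cos (c + k * x) * k) + 0 + d * 1);
   [|unfold trig; ring].
  apply (dlim_ext (fun s => (p * cos (c + k * s) + q * sin (c + k * s)) + (fun _ => r) s + (fun s => d * s) s)).
  { intros y; unfold trig; ring. }
  apply (derivable_pt_lim_plus (fun s => (p * cos (c + k * s) + q * sin (c + k * s)) + r)).
  apply (derivable_pt_lim_plus (fun s => (p * cos (c + k * s) + q * sin (c + k * s)))).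
  apply (derivable_pt_lim_plus (fun s => p * cos (c + k * s)) (fun s => q * sin (c + k * s))).
  - apply (derivable_pt_lim_scal (fun s => cos (c + k * s))). exact Hc.
  - apply (derivable_pt_lim_scal (fun s => sin (c + k * s))). exact Hs.
  - apply derivable_pt_lim_const.
  - apply (derivable_pt_lim_scal id). apply derivable_pt_lim_id.
Qed.

Definition Dtr (p q r d c k : R) := trig (k * q) (- (k * p)) d 0 c k.
Definition DDtr (p q r d c k : R) := trig (k * (- (k * p))) (- (k * (k * q))) 0 0 c k.

Definition gl (a b : R) (f1 f2 f3 : R -> R) := glue2 a f1 (glue2 b f2 f3).

Lemma gl_deriv a b f1 f2 f3 f1' f2' f3' : a < b ->
  (forall x, derivable_pt_lim f1 x (f1' x)) ->
  (forall x, derivable_pt_lim f2 x (f2' x)) ->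
  (forall x, derivable_pt_lim f3 x (f3' x)) ->
  f1 a = f2 a -> f1' a = f2' a -> f2 b = f3 b -> f2' b = f3' b ->
  forall x, derivable_pt_lim (gl a b f1 f2 f3) x (gl a b f1' f2' f3' x).
Proof.
  intros Hab H1 H2 H3 E1 E2 E3 E4. unfold gl.
  apply glue2_deriv; auto.
  - apply glue2_deriv; auto.
  - unfold glue2. destruct (Rle_dec a b); [auto|lra].
  - unfold glue2. destruct (Rle_dec a b); [auto|lra].
Qed.

Lemma gl_ctn a b f1 f2 f3 : a < b ->
  (forall x, ctn f1 x) -> (forall x, ctn f2 x) -> (forall x, ctn f3 x) ->
  f1 a = f2 a -> f2 b = f3 b -> forall x, ctn (gl a b f1 f2 f3) x.
Proof.
  intros Hab H1 H2 H3 E1 E2. unfold gl.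
  apply glue2_ctn; auto.
  - apply glue2_ctn; auto.
  - unfold glue2. destruct (Rle_dec a b); [auto|lra].
Qed.

Lemma gl_d1 a b f1 f2 f3 x l : a < b -> x < a -> derivable_pt_lim f1 x l ->
  derivable_pt_lim (gl a b f1 f2 f3) x l.
Proof. intros. unfold gl. apply glue2_left; auto. Qed.
Lemma gl_d2 a b f1 f2 f3 x l : a < x -> x < b -> derivable_pt_lim f2 x l ->
  derivable_pt_lim (gl a b f1 f2 f3) x l.
Proof. intros. unfold gl. apply glue2_right; auto. apply glue2_left; auto. Qed.
Lemma gl_d3 a b f1 f2 f3 x l : a < b -> b < x -> derivable_pt_lim f3 x l ->
  derivable_pt_lim (gl a b f1 f2 f3) x l.
Proof. intros. unfold gl. apply glue2_right; [lra|]. apply glue2_right; auto. Qed.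

Lemma gl_v1 a b f1 f2 f3 x : x <= a -> gl a b f1 f2 f3 x = f1 x.
Proof. intros. unfold gl, glue2. destruct (Rle_dec x a); [auto|lra]. Qed.
Lemma gl_v2 a b f1 f2 f3 x : a < x -> x <= b -> gl a b f1 f2 f3 x = f2 x.
Proof. intros. unfold gl, glue2. destruct (Rle_dec x a); [lra|].
  destruct (Rle_dec x b); [auto|lra]. Qed.
Lemma gl_v3 a b f1 f2 f3 x : b < x -> a < b -> gl a b f1 f2 f3 x = f3 x.
Proof. intros. unfold gl, glue2. destruct (Rle_dec x a); [lra|].
  destruct (Rle_dec x b); [lra|auto]. Qed.

Lemma Dtr_ok p q r d c k x : derivable_pt_lim (trig p q r d c k) x (Dtr p q r d c k x).
Proof. apply trig_deriv. Qed.
Lemma DDtr_ok p q r d c k x : derivable_pt_lim (Dtr p q r d c k) x (DDtr p q r d c k x).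
Proof. unfold Dtr, DDtr. apply dlim_eq with (1 := trig_deriv _ _ _ _ _ _ x). unfold trig; ring. Qed.
Lemma Dtr_ctn p q r d c k x : ctn (Dtr p q r d c k) x.
Proof. apply deriv_ctn with (1 := DDtr_ok p q r d c k x). Qed.


Definition pa (t1 V : R) := t1 / V.
Definition pb (t1 V L : R) := t1 / V + PI / L.
Definition phi0 (th1 t1 W V : R) := th1 + W * (t1 / V).
Definition cc (t1 V L : R) := - (L * (t1 / V)).
Definition c3 (th1 t1 W V L : R) := th1 + W * (t1 / V) + PI - W * (t1 / V + PI / L).

(* generic component: cylinder coefficients (p1,q1,r1,d1) on seg1/seg3 and (p2,q2) on cap *)
Definition gcomp (T : (R -> R -> R -> R -> R -> R -> R -> R)) th1 t1 W V L
   (p1 q1 r1 d1 p2 q2 p3 q3 r3 d3 : R) :=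
  gl (pa t1 V) (pb t1 V L) (T p1 q1 r1 d1 th1 W) (T p2 q2 0 0 (cc t1 V L) L)
     (T p3 q3 r3 d3 (c3 th1 t1 W V L) W).

Definition GX T th1 t1 W V L :=
  let f := phi0 th1 t1 W V in
  gcomp T th1 t1 W V L 1 0 0 0 (cos f) (- (W / L) * sin f) 1 0 0 0.
Definition GY T th1 t1 W V L :=
  let f := phi0 th1 t1 W V in
  gcomp T th1 t1 W V L 0 1 0 0 (sin f) ((W / L) * cos f) 0 1 0 0.
Definition GZ T th1 t1 W V L :=
  gcomp T th1 t1 W V L 0 0 t1 (- V) 0 (- (V / L)) 0 0 (- (V * pb t1 V L)) V.

Lemma id_a L t1 V : - (L * (t1 / V)) + L * (t1 / V) = 0. Proof. ring. Qed.
Lemma id_b L t1 V : L <> 0 -> - (L * (t1 / V)) + L * (t1 / V + PI / L) = PI.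
Proof. intros. unfold Rdiv. rewrite Rmult_plus_distr_l.
  replace (L * (PI * / L)) with PI by (field; auto). ring. Qed.
Lemma id_c th1 t1 W V L : th1 + W * (t1 / V) + PI - W * (t1 / V + PI / L) + W * (t1 / V + PI / L)
   = (th1 + W * (t1 / V)) + PI. Proof. ring. Qed.

Ltac matchtac :=
  unfold trig, Dtr, pa, pb, cc, c3, phi0;
  try rewrite id_a; try (rewrite id_b; [|lra]); try rewrite id_c;
  rewrite ?cos_0, ?sin_0, ?cos_PI, ?sin_PI, ?neg_cos, ?neg_sin;
  field; lra.

Lemma match_all th1 t1 W V L (HL : 0 < L) (HV : 0 < V) :
  let a := pa t1 V in let b := pb t1 V L in let f := phi0 th1 t1 W V in
  let c := cc t1 V L in let d := c3 th1 t1 W V L in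
  trig 1 0 0 0 th1 W a = trig (cos f) (- (W / L) * sin f) 0 0 c L a /\
  Dtr 1 0 0 0 th1 W a = Dtr (cos f) (- (W / L) * sin f) 0 0 c L a /\
  trig (cos f) (- (W / L) * sin f) 0 0 c L b = trig 1 0 0 0 d W b /\
  Dtr (cos f) (- (W / L) * sin f) 0 0 c L b = Dtr 1 0 0 0 d W b /\
  trig 0 1 0 0 th1 W a = trig (sin f) ((W / L) * cos f) 0 0 c L a /\
  Dtr 0 1 0 0 th1 W a = Dtr (sin f) ((W / L) * cos f) 0 0 c L a /\
  trig (sin f) ((W / L) * cos f) 0 0 c L b = trig 0 1 0 0 d W b /\
  Dtr (sin f) ((W / L) * cos f) 0 0 c L b = Dtr 0 1 0 0 d W b /\
  trig 0 0 t1 (- V) th1 W a = trig 0 (- (V / L)) 0 0 c L a /\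
  Dtr 0 0 t1 (- V) th1 W a = Dtr 0 (- (V / L)) 0 0 c L a /\
  trig 0 (- (V / L)) 0 0 c L b = trig 0 0 (- (V * b)) V d W b /\
  Dtr 0 (- (V / L)) 0 0 c L b = Dtr 0 0 (- (V * b)) V d W b.
Proof.
  intros. subst a b f c d.
  repeat split.
  all: unfold Dtr; unfold trig, pa, pb, cc, c3, phi0; try rewrite id_a; try (rewrite id_b; [|lra]); try rewrite id_c; rewrite ?cos_0, ?sin_0, ?cos_PI, ?sin_PI, ?neg_cos, ?neg_sin.
  all: try (field; lra).
  all: idtac.
Qed.

Definition gg T th1 t1 W V L s :=
  Pt (GX T th1 t1 W V L s) (GY T th1 t1 W V L s) (GZ T th1 t1 W V L s).


Lemma ab_lt t1 V L : 0 < L -> pa t1 V < pb t1 V L.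
Proof. intros. unfold pa, pb. assert (0 < PI / L) by (apply Rdiv_lt_0_compat; [apply PI_RGT_0|auto]). lra. Qed.

Lemma vals1 T th1 t1 W V L s : s <= pa t1 V ->
  gg T th1 t1 W V L s = Pt (T 1 0 0 0 th1 W s) (T 0 1 0 0 th1 W s) (T 0 0 t1 (-V) th1 W s).
Proof. intros. unfold gg, GX, GY, GZ, gcomp; cbv zeta. rewrite !gl_v1; auto. Qed.

Lemma vals2 T th1 t1 W V L s : pa t1 V < s -> s <= pb t1 V L ->
  gg T th1 t1 W V L s =
  Pt (T (cos (phi0 th1 t1 W V)) (- (W / L) * sin (phi0 th1 t1 W V)) 0 0 (cc t1 V L) L s)
     (T (sin (phi0 th1 t1 W V)) ((W / L) * cos (phi0 th1 t1 W V)) 0 0 (cc t1 V L) L s)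
     (T 0 (- (V / L)) 0 0 (cc t1 V L) L s).
Proof. intros. unfold gg, GX, GY, GZ, gcomp; cbv zeta. rewrite !gl_v2; auto. Qed.

Lemma vals3 T th1 t1 W V L s : 0 < L -> pb t1 V L < s ->
  gg T th1 t1 W V L s =
  Pt (T 1 0 0 0 (c3 th1 t1 W V L) W s) (T 0 1 0 0 (c3 th1 t1 W V L) W s)
     (T 0 0 (- (V * pb t1 V L)) V (c3 th1 t1 W V L) W s).
Proof. intros. unfold gg, GX, GY, GZ, gcomp; cbv zeta. rewrite !gl_v3; auto; apply ab_lt; auto. Qed.

Lemma gl_dd a b f1 f2 f3 f1' f2' f3' t : a < b -> t <> a -> t <> b ->
  (forall x, derivable_pt_lim f1 x (f1' x)) ->
  (forall x, derivable_pt_lim f2 x (f2' x)) ->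
  (forall x, derivable_pt_lim f3 x (f3' x)) ->
  derivable_pt_lim (gl a b f1 f2 f3) t (gl a b f1' f2' f3' t).
Proof.
  intros Hab Ha Hb H1 H2 H3.
  destruct (Rlt_or_le t a).
  - rewrite gl_v1 by lra. apply gl_d1; auto.
  - destruct (Rlt_or_le t b).
    + rewrite gl_v2 by lra. apply gl_d2; auto; lra.
    + rewrite gl_v3 by lra. apply gl_d3; auto; lra.
Qed.

Lemma G_deriv th1 t1 W V L x : 0 < L -> 0 < V ->
  derivable_pt_lim (GX trig th1 t1 W V L) x (GX Dtr th1 t1 W V L x) /\
  derivable_pt_lim (GY trig th1 t1 W V L) x (GY Dtr th1 t1 W V L x) /\
  derivable_pt_lim (GZ trig th1 t1 W V L) x (GZ Dtr th1 t1 W V L x).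
Proof.
  intros HL HV. destruct (match_all th1 t1 W V L HL HV) as
    (E1 & E2 & E3 & E4 & E5 & E6 & E7 & E8 & E9 & E10 & E11 & E12).
  unfold GX, GY, GZ, gcomp; cbv zeta.
  repeat split; apply gl_deriv; try apply ab_lt; auto; intros; apply Dtr_ok.
Qed.

Lemma G_ctn th1 t1 W V L x : 0 < L -> 0 < V ->
  ctn (GX Dtr th1 t1 W V L) x /\ ctn (GY Dtr th1 t1 W V L) x /\ ctn (GZ Dtr th1 t1 W V L) x.
Proof.
  intros HL HV. destruct (match_all th1 t1 W V L HL HV) as
    (E1 & E2 & E3 & E4 & E5 & E6 & E7 & E8 & E9 & E10 & E11 & E12).
  unfold GX, GY, GZ, gcomp; cbv zeta.
  repeat split; apply gl_ctn; try apply ab_lt; auto; intros; apply Dtr_ctn.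
Qed.

Lemma G_dd th1 t1 W V L x : 0 < L -> x <> pa t1 V -> x <> pb t1 V L ->
  derivable_pt_lim (GX Dtr th1 t1 W V L) x (GX DDtr th1 t1 W V L x) /\
  derivable_pt_lim (GY Dtr th1 t1 W V L) x (GY DDtr th1 t1 W V L x) /\
  derivable_pt_lim (GZ Dtr th1 t1 W V L) x (GZ DDtr th1 t1 W V L x).
Proof.
  intros HL H1 H2. unfold GX, GY, GZ, gcomp; cbv zeta.
  repeat split; apply gl_dd; try apply ab_lt; auto; intros; apply DDtr_ok.
Qed.

Lemma cs1 x : cos x * cos x + sin x * sin x = 1.
Proof. pose proof (sin2_cos2 x) as H. unfold Rsqr in H. lra. Qed.

Lemma alg_speed2 L W V cf sf cp sp s : L <> 0 -> cf*cf+sf*sf=1 -> cp*cp+sp*sp=1 -> L*L = V*V+W*W ->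
  (L * (- (W / L) * sf) * cp + - (L * cf) * sp + 0 + 0 * s) ^ 2 +
  (L * (W / L * cf) * cp + - (L * sf) * sp + 0 + 0 * s) ^ 2 +
  (L * - (V / L) * cp + - (L * 0) * sp + 0 + 0 * s) ^ 2 = L ^ 2.
Proof.
  intros HL H1 H2 H3.
  replace (L * (- (W / L) * sf)) with (- (W * sf)) by (field; auto).
  replace (L * (W / L * cf)) with (W * cf) by (field; auto).
  replace (L * - (V / L)) with (- V) by (field; auto).
  transitivity ((cf*cf+sf*sf) * (W*W*cp*cp + L*L*sp*sp) + V*V*cp*cp); [ring|].
  rewrite H1. transitivity ((V*V+W*W)*cp*cp + L*L*sp*sp); [ring|]. rewrite <- H3.
  transitivity (L*L*(cp*cp+sp*sp)); [ring|]. rewrite H2; ring.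
Qed.

Lemma alg_norm2 L W V cf sf cp sp s : L <> 0 -> cf*cf+sf*sf=1 -> cp*cp+sp*sp=1 -> L*L = V*V+W*W ->
  (cf * cp + - (W / L) * sf * sp + 0 + 0 * s) ^ 2 +
  (sf * cp + W / L * cf * sp + 0 + 0 * s) ^ 2 +
  (0 * cp + - (V / L) * sp + 0 + 0 * s) ^ 2 = 1.
Proof.
  intros HL H1 H2 H3.
  transitivity ((cf*cf+sf*sf) * (cp*cp + (W/L)*(W/L)*sp*sp) + (V/L)*(V/L)*sp*sp); [ring|].
  rewrite H1.
  replace ((V/L)*(V/L)) with (1 - (W/L)*(W/L)).
  2: { apply Rmult_eq_reg_r with (L*L). 2: apply Rmult_integral_contrapositive; auto.
       field_simplify; auto. simpl. lra. }
  transitivity (cp*cp+sp*sp); [ring|]. auto.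
Qed.


Lemma zv1 th1 t1 W V L s : s <= pa t1 V -> pz (gg trig th1 t1 W V L s) = t1 - V * s.
Proof. intro. rewrite vals1 by auto. simpl pz. unfold trig. ring. Qed.

Lemma zv2 th1 t1 W V L s : pa t1 V < s -> s <= pb t1 V L ->
  pz (gg trig th1 t1 W V L s) = - (V / L) * sin (L * (s - pa t1 V)).
Proof. intros. rewrite vals2 by auto. simpl pz. unfold trig, cc, pa.
  replace (- (L * (t1 / V)) + L * s) with (L * (s - t1 / V)) by ring. ring. Qed.

Lemma zv3 th1 t1 W V L s : 0 < L -> pb t1 V L < s ->
  pz (gg trig th1 t1 W V L s) = V * (s - pb t1 V L).
Proof. intros. rewrite vals3 by auto. simpl pz. unfold trig. ring. Qed.

Lemma xy1 th1 t1 W V L s : s <= pa t1 V ->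
  px (gg trig th1 t1 W V L s) ^ 2 + py (gg trig th1 t1 W V L s) ^ 2 = 1.
Proof. intro. rewrite vals1 by auto. simpl px; simpl py. unfold trig.
  set (u := th1 + W * s). transitivity (cos u * cos u + sin u * sin u); [ring|apply cs1]. Qed.

Lemma xy3 th1 t1 W V L s : 0 < L -> pb t1 V L < s ->
  px (gg trig th1 t1 W V L s) ^ 2 + py (gg trig th1 t1 W V L s) ^ 2 = 1.
Proof. intros. rewrite vals3 by auto. simpl px; simpl py. unfold trig.
  set (u := c3 th1 t1 W V L + W * s). transitivity (cos u * cos u + sin u * sin u); [ring|apply cs1]. Qed.

Lemma xyz2 th1 t1 W V L s : 0 < L -> L*L = V*V+W*W -> pa t1 V < s -> s <= pb t1 V L ->
  px (gg trig th1 t1 W V L s) ^ 2 + py (gg trig th1 t1 W V L s) ^ 2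
  + pz (gg trig th1 t1 W V L s) ^ 2 = 1.
Proof. intros. rewrite vals2 by auto. simpl px; simpl py; simpl pz. unfold trig.
  apply alg_norm2; try lra; apply cs1. Qed.

Lemma speed th1 t1 W V L s : 0 < L -> L*L = V*V+W*W ->
  px (gg Dtr th1 t1 W V L s) ^ 2 + py (gg Dtr th1 t1 W V L s) ^ 2
  + pz (gg Dtr th1 t1 W V L s) ^ 2 = L ^ 2.
Proof.
  intros HL HLL.
  destruct (Rle_or_lt s (pa t1 V)).
  - rewrite vals1 by auto. simpl px; simpl py; simpl pz. unfold Dtr, trig.
    transitivity (W*W*(cos (th1 + W*s) * cos (th1 + W*s) + sin (th1 + W*s) * sin (th1 + W*s)) + V*V);
      [ring|]. rewrite cs1. simpl. lra.
  - destruct (Rle_or_lt s (pb t1 V L)).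
    + rewrite vals2 by auto. simpl px; simpl py; simpl pz. unfold Dtr, trig.
      apply alg_speed2; try lra; apply cs1.
    + rewrite vals3 by auto. simpl px; simpl py; simpl pz. unfold Dtr, trig.
      set (u := c3 th1 t1 W V L + W * s).
      transitivity (W*W*(cos u * cos u + sin u * sin u) + V*V); [ring|].
      rewrite cs1. simpl. lra.
Qed.

Lemma acc1 th1 t1 W V L s l : s <= pa t1 V -> forall c, In c comps ->
  c (gg DDtr th1 t1 W V L s) = - (W * W) * c (normal l PC (gg trig th1 t1 W V L s)).
Proof. intros Hs c Hc. simpl in Hc. unfold normal.
  rewrite !vals1 by auto.
  destruct Hc as [<-|[<-|[<-|[]]]]; simpl; unfold DDtr, trig; ring. Qed.

Lemma acc2 th1 t1 W V L s l : pa t1 V < s -> s <= pb t1 V L -> forall c, In c comps ->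
  c (gg DDtr th1 t1 W V L s) = - (L * L) * c (normal l PH0 (gg trig th1 t1 W V L s)).
Proof. intros Hs Hs' c Hc. simpl in Hc. unfold normal.
  rewrite !vals2 by auto.
  destruct Hc as [<-|[<-|[<-|[]]]]; simpl; unfold DDtr, trig; ring. Qed.

Lemma acc3 th1 t1 W V L s l : 0 < L -> pb t1 V L < s -> forall c, In c comps ->
  c (gg DDtr th1 t1 W V L s) = - (W * W) * c (normal l PC (gg trig th1 t1 W V L s)).
Proof. intros HL Hs c Hc. simpl in Hc. unfold normal.
  rewrite !vals3 by auto.
  destruct Hc as [<-|[<-|[<-|[]]]]; simpl; unfold DDtr, trig; ring. Qed.

Lemma geod l th1 t1 t2 W V L : 0 < t1 < l -> 0 < t2 < l -> 0 < V -> 0 < L ->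
  L * L = V * V + W * W -> pb t1 V L + t2 / V = 1 ->
  is_geodesic l (gg trig th1 t1 W V L).
Proof.
  intros Ht1 Ht2 HV HL HLL Hsum.
  set (a := pa t1 V). set (b := pb t1 V L).
  assert (Ha : V * a = t1) by (unfold a, pa; field; lra).
  assert (Hb : L * (b - a) = PI) by (unfold a, b, pa, pb; field; lra).
  assert (H1 : V * (1 - b) = t2).
  { replace (1 - b) with (t2 / V) by (unfold b; lra). field; lra. }
  assert (Hab : a < b) by (apply ab_lt; auto).
  assert (Ha0 : 0 < a) by (unfold a, pa; apply Rdiv_lt_0_compat; lra).
  assert (Hb1 : b < 1).
  { assert (0 < t2 / V) by (apply Rdiv_lt_0_compat; lra). unfold b; lra. }
  assert (zs1 : forall s, 0 < s < a -> 0 < pz (gg trig th1 t1 W V L s) < l).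
  { intros s Hs. rewrite zv1 by (unfold a in Hs; lra).
    assert (V * s < V * a) by (apply Rmult_lt_compat_l; lra).
    assert (0 < V * s) by (apply Rmult_lt_0_compat; lra). lra. }
  assert (zs2 : forall s, a < s < b -> pz (gg trig th1 t1 W V L s) < 0).
  { intros s Hs. rewrite zv2 by (unfold a, b in *; lra).
    assert (0 < sin (L * (s - pa t1 V))).
    { apply sin_gt_0. apply Rmult_lt_0_compat; unfold a in Hs; lra.
      rewrite <- Hb. apply Rmult_lt_compat_l; unfold a in *; lra. }
    assert (0 < V / L) by (apply Rdiv_lt_0_compat; lra).
    assert (0 < V / L * sin (L * (s - pa t1 V))) by (apply Rmult_lt_0_compat; lra).
    lra. }
  assert (zs3 : forall s, b < s < 1 -> 0 < pz (gg trig th1 t1 W V L s) < l).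
  { intros s Hs. rewrite zv3 by (unfold b in Hs; lra).
    assert (V * (s - pb t1 V L) < V * (1 - b)) by (apply Rmult_lt_compat_l; unfold b in *; lra).
    assert (0 < V * (s - pb t1 V L)) by (apply Rmult_lt_0_compat; unfold b in *; lra). lra. }
  split.
  { intros t Ht. unfold in_N, in_piece.
    destruct (Rle_or_lt t a).
    - left. split. apply xy1; auto. rewrite zv1 by auto.
      assert (V * t <= V * a) by (apply Rmult_le_compat_l; lra).
      assert (0 <= V * t) by (apply Rmult_le_pos; lra). lra.
    - destruct (Rle_or_lt t b).
      + right; left. split. apply xyz2; auto.
        destruct (Req_dec t b) as [->|Hne].
        * rewrite zv2 by auto. unfold b. replace (L * (pb t1 V L - pa t1 V)) with PI
            by (rewrite <- Hb; reflexivity). rewrite sin_PI. lra.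
        * left. apply zs2. lra.
      + left. split. apply xy3; auto. rewrite zv3 by auto.
        assert (V * (t - b) <= V * (1 - b)) by (apply Rmult_le_compat_l; lra).
        assert (0 <= V * (t - b)) by (apply Rmult_le_pos; lra). unfold b in *. lra. }
  exists (gg Dtr th1 t1 W V L). split; [|split].
  { intros c Hc. simpl in Hc.
    destruct Hc as [<-|[<-|[<-|[]]]]; split;
      try (apply deriv_has_deriv_on; intro x; apply (G_deriv th1 t1 W V L x); auto);
      try (apply ctn_cont_on; intro x; apply (G_ctn th1 t1 W V L x); auto). }
  { exists L. split; auto. intros t _. apply speed; auto. }
  intros P a' b' Ha' Hab' Hb' Hin t Ht.
  assert (Hne : t <> a /\ t <> b).
  { split; intros ->.
    - set (t' := (a' + a) / 2). set (t'' := (a + Rmin b' b) / 2).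
      assert (Hm1 : Rmin b' b <= b') by apply Rmin_l.
      assert (Hm2 : Rmin b' b <= b) by apply Rmin_r.
      assert (Hm3 : a < Rmin b' b) by (apply Rmin_glb_lt; lra).
      assert (A1 := zs1 t' ltac:(unfold t'; lra)).
      assert (A2 := zs2 t'' ltac:(unfold t''; lra)).
      assert (I1 := Hin t' ltac:(unfold t'; lra)).
      assert (I2 := Hin t'' ltac:(unfold t''; lra)).
      destruct P; cbn [in_piece] in I1, I2; lra.
    - set (t' := (Rmax a' a + b) / 2). set (t'' := (b + b') / 2).
      assert (Hm1 : a' <= Rmax a' a) by apply Rmax_l.
      assert (Hm2 : a <= Rmax a' a) by apply Rmax_r.
      assert (Hm3 : Rmax a' a < b) by (apply Rmax_lub_lt; lra).
      assert (A1 := zs2 t' ltac:(unfold t'; lra)).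
      assert (A2 := zs3 t'' ltac:(unfold t''; lra)).
      assert (I1 := Hin t' ltac:(unfold t'; lra)).
      assert (I2 := Hin t'' ltac:(unfold t''; lra)).
      destruct P; cbn [in_piece] in I1, I2; lra. }
  destruct Hne as [Hna Hnb].
  exists (gg DDtr th1 t1 W V L t). split.
  { intros c Hc. simpl in Hc. destruct (G_dd th1 t1 W V L t HL Hna Hnb) as (D1 & D2 & D3).
    destruct Hc as [<-|[<-|[<-|[]]]]; assumption. }
  assert (It := Hin t Ht).
  destruct (Rlt_or_le t a).
  - assert (A := zs1 t ltac:(lra)).
    destruct P; cbn [in_piece] in It; try lra.
    exists (- (W * W)). apply acc1. unfold a in *; lra.
  - destruct (Rlt_or_le t b).
    + assert (A := zs2 t ltac:(lra)).
      destruct P; cbn [in_piece] in It; try lra.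
      exists (- (L * L)). apply acc2; unfold a, b in *; lra.
    + assert (A := zs3 t ltac:(lra)).
      destruct P; cbn [in_piece] in It; try lra.
      exists (- (W * W)). apply acc3; auto; unfold b in *; lra.
Qed.

Lemma start_pt th1 t1 W V L : 0 < t1 -> 0 < V ->
  gg trig th1 t1 W V L 0 = cyl_pt t1 th1.
Proof.
  intros. rewrite vals1.
  2: { unfold pa. apply Rlt_le, Rdiv_lt_0_compat; lra. }
  unfold cyl_pt, trig. replace (th1 + W * 0) with th1 by ring. f_equal; ring.
Qed.

Lemma end_pt th1 th2 t1 t2 W V L k : 0 < t2 -> 0 < V -> 0 < L ->
  pb t1 V L + t2 / V = 1 ->
  W * (t1 / V + t2 / V) = th2 - th1 - PI + 2 * INR k * PI ->
  gg trig th1 t1 W V L 1 = cyl_pt t2 th2.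
Proof.
  intros H2 HV HL Hs Hang.
  assert (0 < t2 / V) by (apply Rdiv_lt_0_compat; lra).
  rewrite vals3 by (auto; lra).
  unfold cyl_pt, trig.
  assert (E : c3 th1 t1 W V L + W * 1 = th2 + 2 * INR k * PI).
  { unfold c3. replace (t1 / V + PI / L) with (pb t1 V L) by reflexivity.
    replace (pb t1 V L) with (1 - t2 / V) by lra. lra. }
  rewrite E, cos_period, sin_period. f_equal; try ring.
  transitivity (V * (1 - pb t1 V L)); [ring|].
  replace (1 - pb t1 V L) with (t2 / V) by lra. field. lra.
Qed.

Lemma mid_eq th1 t1 t2 W V L : 0 < t1 -> 0 < V -> 0 < L -> t1 = t2 ->
  pb t1 V L + t2 / V = 1 ->
  pz (gg trig th1 t1 W V L (1/2)) = - (V / L).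
Proof.
  intros H1 HV HL <- Hs. unfold pb in Hs.
  assert (0 < PI / L) by (apply Rdiv_lt_0_compat; [apply PI_RGT_0|lra]).
  rewrite zv2; unfold pb, pa; try lra.
  replace (L * (1 / 2 - t1 / V)) with (PI / 2).
  - rewrite sin_PI2. ring.
  - assert (E : 1/2 - t1/V = PI / L / 2) by lra. rewrite E. field. lra.
Qed.

Lemma mid_gt th1 t1 t2 W V L : 0 < V -> 0 < L -> (t1 - t2) * L > PI * V ->
  pb t1 V L + t2 / V = 1 ->
  pz (gg trig th1 t1 W V L (1/2)) = t1 - V / 2.
Proof.
  intros HV HL Hc Hs.
  assert (E : 1 / 2 < t1 / V).
  { unfold pb in Hs.
    assert (PI / L < (t1 - t2) / V).
    { apply (Rmult_lt_reg_r (L * V)). apply Rmult_lt_0_compat; lra.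
      replace (PI / L * (L * V)) with (PI * V) by (field; lra).
      replace ((t1 - t2) / V * (L * V)) with ((t1 - t2) * L) by (field; lra). lra. }
    replace ((t1 - t2) / V) with (t1 / V - t2 / V) in H by (field; lra). lra. }
  rewrite zv1 by (unfold pa; lra). field.
Qed.

Lemma mid_lt th1 t1 t2 W V L : 0 < V -> 0 < L -> (t2 - t1) * L > PI * V ->
  pb t1 V L + t2 / V = 1 ->
  pz (gg trig th1 t1 W V L (1/2)) = t2 - V / 2.
Proof.
  intros HV HL Hc Hs.
  assert (E : pb t1 V L < 1 / 2).
  { unfold pb in *.
    assert (PI / L < (t2 - t1) / V).
    { apply (Rmult_lt_reg_r (L * V)). apply Rmult_lt_0_compat; lra.
      replace (PI / L * (L * V)) with (PI * V) by (field; lra).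
      replace ((t2 - t1) / V * (L * V)) with ((t2 - t1) * L) by (field; lra). lra. }
    replace ((t2 - t1) / V) with (t2 / V - t1 / V) in H by (field; lra). lra. }
  rewrite zv3 by auto. replace (pb t1 V L) with (1 - t2 / V) by lra. field. lra.
Qed.

Definition mk th1 th2 t1 t2 (k : nat) := (th2 - th1 - PI + 2 * INR k * PI) / (t1 + t2).
Definition qk th1 th2 t1 t2 k := sqrt (1 + mk th1 th2 t1 t2 k * mk th1 th2 t1 t2 k).
Definition Vk th1 th2 t1 t2 k := t1 + t2 + PI / qk th1 th2 t1 t2 k.
Definition Wk th1 th2 t1 t2 k := mk th1 th2 t1 t2 k * Vk th1 th2 t1 t2 k.
Definition Lk th1 th2 t1 t2 k := qk th1 th2 t1 t2 k * Vk th1 th2 t1 t2 k.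

Lemma params th1 th2 t1 t2 k : 0 < t1 -> 0 < t2 ->
  let q := qk th1 th2 t1 t2 k in let V := Vk th1 th2 t1 t2 k in
  let W := Wk th1 th2 t1 t2 k in let L := Lk th1 th2 t1 t2 k in
  0 < q /\ 0 < V /\ 0 < L /\ L * L = V * V + W * W /\ pb t1 V L + t2 / V = 1 /\
  W * (t1 / V + t2 / V) = th2 - th1 - PI + 2 * INR k * PI.
Proof.
  intros H1 H2 q V W L.
  set (m := mk th1 th2 t1 t2 k) in *.
  assert (Hq2 : q * q = 1 + m * m).
  { unfold q, qk. fold m. apply sqrt_sqrt. nra. }
  assert (Hq : 0 < q) by (unfold q, qk; apply sqrt_lt_R0; fold m; nra).
  assert (HPq : 0 < PI / q) by (apply Rdiv_lt_0_compat; [apply PI_RGT_0|lra]).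
  assert (HV : 0 < V) by (unfold V, Vk; fold q; lra).
  assert (HL : 0 < L) by (unfold L, Lk; fold q V; nra).
  repeat split; auto.
  - unfold L, W, Lk, Wk; fold q V m.
    transitivity (q * q * (V * V)); [ring|]. rewrite Hq2. ring.
  - unfold pb, L, Lk; fold q V.
    transitivity ((t1 + t2 + PI / q) / V); [field; lra|].
    replace (t1 + t2 + PI / q) with V by reflexivity. field. lra.
  - unfold W, Wk; fold m V.
    transitivity (m * (t1 + t2)); [field; lra|].
    unfold m, mk. field. lra.
Qed.

Lemma geod_k l th1 th2 t1 t2 k : 0 < t1 < l -> 0 < t2 < l ->
  in_G l (cyl_pt t1 th1) (cyl_pt t2 th2)
    (gg trig th1 t1 (Wk th1 th2 t1 t2 k) (Vk th1 th2 t1 t2 k) (Lk th1 th2 t1 t2 k)).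
Proof.
  intros H1 H2. destruct (params th1 th2 t1 t2 k) as (Hq & HV & HL & HLL & Hs & Hang); try lra.
  split; [|split].
  - eapply geod; eauto.
  - apply start_pt; lra.
  - eapply end_pt; eauto; lra.
Qed.

Definition zk th1 th2 t1 t2 k :=
  pz (gg trig th1 t1 (Wk th1 th2 t1 t2 k) (Vk th1 th2 t1 t2 k) (Lk th1 th2 t1 t2 k) (1/2)).

Lemma zk_form th1 th2 t1 t2 k : 0 < t1 -> 0 < t2 ->
  let q := qk th1 th2 t1 t2 k in
  (t1 = t2 -> zk th1 th2 t1 t2 k = - (1 / q)) /\
  (t2 < t1 -> (t1 - t2) * q > PI -> zk th1 th2 t1 t2 k = (t1 - t2) / 2 - PI / (2 * q)) /\
  (t1 < t2 -> (t2 - t1) * q > PI -> zk th1 th2 t1 t2 k = (t2 - t1) / 2 - PI / (2 * q)).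
Proof.
  intros H1 H2 q.
  destruct (params th1 th2 t1 t2 k) as (Hq & HV & HL & HLL & Hs & Hang); try lra.
  fold q in Hq.
  assert (EL : Lk th1 th2 t1 t2 k = q * Vk th1 th2 t1 t2 k) by reflexivity.
  assert (EV : Vk th1 th2 t1 t2 k = t1 + t2 + PI / q) by reflexivity.
  repeat split; intros; unfold zk.
  - rewrite (mid_eq th1 t1 t2); auto. rewrite EL. field. split; lra.
  - rewrite (mid_gt th1 t1 t2); auto.
    + rewrite EV. field. lra.
    + rewrite EL. assert ((t1 - t2) * q * Vk th1 th2 t1 t2 k > PI * Vk th1 th2 t1 t2 k)
        by (apply Rmult_gt_compat_r; lra). nra.
  - rewrite (mid_lt th1 t1 t2); auto.
    + rewrite EV. field. lra.
    + rewrite EL. assert ((t2 - t1) * q * Vk th1 th2 t1 t2 k > PI * Vk th1 th2 t1 t2 k)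
        by (apply Rmult_gt_compat_r; lra). nra.
Qed.

Lemma lemma4' (l : R) (hl : 0 < l) (t1 th1 t2 th2 : R) :
  0 < t1 < l -> 0 < t2 < l ->
  ~ midpoint_secure l (cyl_pt t1 th1) (cyl_pt t2 th2).
Proof.
  intros H1 H2 [B HB].
  set (T := t1 + t2). set (c0 := th2 - th1 - PI).
  set (M1 := Rmax 0 (PI / Rabs (t1 - t2))).
  assert (HPI := PI_RGT_0).
  destruct (INR_unbounded ((T * M1 - c0) / (2 * PI))) as [K HK].
  assert (HK' : 2 * INR K * PI > T * M1 - c0).
  { apply Rmult_gt_compat_r with (r := 2 * PI) in HK; [|lra].
    replace ((T * M1 - c0) / (2 * PI) * (2 * PI)) with (T * M1 - c0) in HK by (field; lra).
    lra. }
  assert (HM10 : 0 <= M1) by apply Rmax_l.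
  assert (Hm : forall n, M1 < mk th1 th2 t1 t2 (K + n)).
  { intros n. unfold mk. rewrite plus_INR. fold c0. fold T.
    assert (0 <= INR n) by apply pos_INR.
    apply (Rmult_lt_reg_r T). unfold T; lra.
    replace ((c0 + 2 * (INR K + INR n) * PI) / T * T) with (c0 + 2 * (INR K + INR n) * PI)
      by (field; unfold T; lra). nra. }
  assert (Hq : forall n, mk th1 th2 t1 t2 (K + n) < qk th1 th2 t1 t2 (K + n)).
  { intros n. unfold qk. set (m := mk th1 th2 t1 t2 (K + n)).
    assert (0 < m) by (specialize (Hm n); unfold m; lra).
    rewrite <- (sqrt_square m) at 1 by lra. apply sqrt_lt_1; nra. }
  assert (Hmono : forall n n', (n < n')%nat ->
     qk th1 th2 t1 t2 (K + n) < qk th1 th2 t1 t2 (K + n')).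
  { intros n n' Hn. unfold qk.
    assert (E : mk th1 th2 t1 t2 (K + n) < mk th1 th2 t1 t2 (K + n')).
    { unfold mk. apply Rmult_lt_compat_r. apply Rinv_0_lt_compat; lra.
      assert (INR (K + n) < INR (K + n')) by (apply lt_INR; lia). nra. }
    pose proof (Hm n). apply sqrt_lt_1; nra. }
  assert (Hcase : exists C D, 0 < D /\ forall n,
     zk th1 th2 t1 t2 (K + n) = C - D / qk th1 th2 t1 t2 (K + n)).
  { destruct (Rtotal_order t1 t2) as [Hlt|[Heq|Hgt]].
    - exists ((t2 - t1) / 2), (PI / 2). split; [lra|]. intros n.
      pose proof (Hm n) as Hmn. pose proof (Hq n) as Hqn.
      destruct (zk_form th1 th2 t1 t2 (K + n)) as (F1 & F2 & F3); try lra.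
      rewrite F3; auto. field. lra.
      assert (PI / Rabs (t1 - t2) <= M1) by apply Rmax_r.
      rewrite Rabs_left in H by lra.
      assert (PI / (- (t1 - t2)) < qk th1 th2 t1 t2 (K + n)) by lra.
      apply (Rmult_lt_compat_r (t2 - t1)) in H0; [|lra].
      replace (PI / - (t1 - t2) * (t2 - t1)) with PI in H0 by (field; lra). lra.
    - exists 0, 1. split; [lra|]. intros n.
      pose proof (Hm n) as Hmn. pose proof (Hq n) as Hqn.
      destruct (zk_form th1 th2 t1 t2 (K + n)) as (F1 & F2 & F3); try lra.
    - exists ((t1 - t2) / 2), (PI / 2). split; [lra|]. intros n.
      pose proof (Hm n) as Hmn. pose proof (Hq n) as Hqn.
      destruct (zk_form th1 th2 t1 t2 (K + n)) as (F1 & F2 & F3); try lra.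
      rewrite F2; auto. field. lra.
      assert (PI / Rabs (t1 - t2) <= M1) by apply Rmax_r.
      rewrite Rabs_right in H by lra.
      assert (PI / (t1 - t2) < qk th1 th2 t1 t2 (K + n)) by lra.
      apply (Rmult_lt_compat_r (t1 - t2)) in H0; [|lra].
      replace (PI / (t1 - t2) * (t1 - t2)) with PI in H0 by (field; lra). lra. }
  destruct Hcase as (C & D & HD & HCD).
  assert (Hinj : forall n n', zk th1 th2 t1 t2 (K + n) = zk th1 th2 t1 t2 (K + n') -> n = n').
  { assert (Hlt : forall n n', (n < n')%nat -> zk th1 th2 t1 t2 (K + n) < zk th1 th2 t1 t2 (K + n')).
    { intros n n' Hn. rewrite !HCD.
      pose proof (Hmono n n' Hn). pose proof (Hm n). pose proof (Hq n).
      assert (D / qk th1 th2 t1 t2 (K + n') < D / qk th1 th2 t1 t2 (K + n)).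
      { unfold Rdiv. apply Rmult_lt_compat_l; auto. apply Rinv_lt_contravar; auto.
        apply Rmult_lt_0_compat; lra. }
      lra. }
    intros n n' E. destruct (Nat.lt_total n n') as [L1|[L1|L1]]; auto.
    - specialize (Hlt _ _ L1). lra.
    - specialize (Hlt _ _ L1). lra. }
  set (f := fun n => zk th1 th2 t1 t2 (K + n)).
  assert (HND : NoDup (map f (seq 0 (S (length B))))).
  { apply FinFun.Injective_map_NoDup. intros x y; apply Hinj. apply seq_NoDup. }
  assert (Hincl : incl (map f (seq 0 (S (length B)))) (map pz B)).
  { intros z Hz. apply in_map_iff in Hz. destruct Hz as [n [<- _]].
    unfold f, zk. apply in_map. apply HB. apply geod_k; auto. }
  apply NoDup_incl_length in Hincl; auto.
  rewrite !length_map, length_seq in Hincl. lia.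
Qed.

Theorem lemma4 (l : R) (hl : 0 < l) (t1 th1 t2 th2 : R) :
  0 < t1 < l -> 0 < t2 < l ->
  ~ midpoint_secure l (cyl_pt t1 th1) (cyl_pt t2 th2).
Proof. exact (lemma4' l hl t1 th1 t2 th2). Qed.
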